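(* For every integer $M$ there exists a graph $G$ with $\gamma_{\rm i}(G)-\mathrm{IR}(G)\ge M$.
   Context: For $S\subseteq V(G)$ and $x\in S$, a private neighbor of $x$ with respect to $S$ is a vertex of $N[S]\setminus N[S\setminus\{x\}]$, where $N[\cdot]$ denotes closed neighborhood; $S$ is irredundant if every vertex of $S$ has a private neighbor with respect to $S$, and $\mathrm{IR}(G)$ is the maximum size of a maximal irredundant set. Indicated domination game on $G$: two players, Dominator and Staller, alternate. In each round Dominator indicates a vertex $v$ not yet dominated by the vertices previously selected by Staller (a vertex dominates itself and its neighbors), and Staller must select a vertex of $N[v]$, adding it to a set $D$. The game ends when $D$ is a dominating set of $G$. Dominator wants to minimize $|D|$ and Staller to maximize it; the size of $D$ under optimal play of both is the indicated domination number $\gamma_{\rm i}(G)$. *)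

(* Defs.v *)
From mathcomp Require Import all_boot all_order all_algebra.
Set Implicit Arguments. Unset Strict Implicit. Unset Printing Implicit Defensive.

Definition simple_graph (T : finType) (e : rel T) : Prop :=
  symmetric e /\ irreflexive e.

Section Graph.
Variables (T : finType) (e : rel T).

Definition cnbh (v : T) : {set T} := [set u | (u == v) || e v u].
Definition cnbhS (S : {set T}) : {set T} := \bigcup_(x in S) cnbh x.

Definition priv (S : {set T}) (x : T) : {set T} :=
  cnbhS S :\: cnbhS (S :\ x).

Definition irredundant (S : {set T}) : bool :=
  [forall x in S, priv S x != set0].

Definition upper_irredundance : nat :=
  \max_(S : {set T} | maxset irredundant S) #|S|.

Definition dominated (D : {set T}) (v : T) : bool := v \in cnbhS D.
Definition dominating (D : {set T}) : bool := [forall v, dominated D v].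

(* Value of the indicated domination game from position D (the set of
   vertices selected so far by Staller), with n moves of fuel.
   Dominator (min) indicates an undominated v, Staller (max) picks
   u in N[v]; each move adds a new vertex to D, so fuel #|T| suffices. *)
Fixpoint igame (n : nat) (D : {set T}) : nat :=
  if dominating D then 0 else
  match n with
  | 0 => 0
  | n'.+1 =>
      \big[minn/#|T|]_(v | ~~ dominated D v)
        \max_(u in cnbh v) (igame n' (u |: D)).+1
  end.

Definition gamma_i : nat := igame #|T| set0.

End Graph.

(* Main.v *)
Require Import Defs.
From mathcomp Require Import all_boot all_order all_algebra.
From mathcomp Require Import zify.
Set Implicit Arguments. Unset Strict Implicit. Unset Printing Implicit Defensive.
Definition E5 (a b : nat) : bool := (a.+1 %% 5 == b) || (b.+1 %% 5 == a).
Definition N5 (y a : nat) : bool := (a == y) || E5 y a.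
Definition nb (bs : seq bool) j := nth false bs j.
Definition domat bs a := has (fun y => nb bs y && N5 y a) (iota 0 5).
Definition alldom bs := all (domat bs) (iota 0 5).
Definition cnt bs := count (nb bs) (iota 0 5).
Definition g bs := if alldom bs then 0 else 3 - cnt bs.
Definition addS (bs : seq bool) b := [seq (j == b) || nb bs j | j <- iota 0 5].
Definition LG bs := all (fun a => ~~ domat bs a ==>
   has (fun b => N5 a b && (g bs <= (g (addS bs b)).+1)) (iota 0 5)) (iota 0 5).
Definition lp bs a := has (fun c => N5 a c &&
   all (fun y => ~~ [&& y != a, nb bs y & N5 y c]) (iota 0 5)) (iota 0 5).
Definition LI bs := all (fun a => nb bs a ==> lp bs a) (iota 0 5) ==> (cnt bs <= 2).

Lemma LG_all bs : size bs = 5 -> LG bs.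
Proof.
case: bs => [|b0 [|b1 [|b2 [|b3 [|b4 [|? ?]]]]]] //= _.
by case: b0; case: b1; case: b2; case: b3; case: b4; vm_compute.
Qed.

Lemma LI_all bs : size bs = 5 -> LI bs.
Proof.
case: bs => [|b0 [|b1 [|b2 [|b3 [|b4 [|? ?]]]]]] //= _.
by case: b0; case: b1; case: b2; case: b3; case: b4; vm_compute.
Qed.

Lemma g_le3 bs : g bs <= 3.
Proof. rewrite /g; case: ifP => //= _; exact: leq_subr. Qed.
Notation TT k := ('I_k * 'I_5)%type.
Definition eG (k : nat) : rel (TT k) := fun x y => (x.1 == y.1) && E5 x.2 y.2.
Definition bsD k (D : {set TT k}) (i : 'I_k) : seq bool :=
  [seq ((i, (inord j : 'I_5)) \in D) | j <- iota 0 5].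
Definition fD k (D : {set TT k}) := \sum_(i < k) g (bsD D i).

Lemma size_bsD k D i : size (@bsD k D i) = 5.
Proof. by rewrite size_map size_iota. Qed.

Lemma nth_bsD k D i j : j < 5 -> nb (@bsD k D i) j = ((i, inord j) \in D).
Proof. by move=> Hj; rewrite /nb (nth_map 0) ?size_iota // nth_iota. Qed.

Lemma eq_inord (a : 'I_5) y : y < 5 -> (a == inord y) = (val a == y).
Proof. by move=> Hy; rewrite -(inj_eq val_inj) /= inordK. Qed.

Lemma inord_val5 (y : 'I_5) : inord (nat_of_ord y) = y :> 'I_5.
Proof. by apply: val_inj; rewrite /= inordK. Qed.

Lemma ord5_mem (y : 'I_5) : (nat_of_ord y) \in iota 0 5.
Proof. by rewrite mem_iota ltn_ord. Qed.

Lemma domE k (D : {set TT k}) (i : 'I_k) (a : 'I_5) :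
  dominated (@eG k) D (i, a) = domat (bsD D i) a.
Proof.
rewrite /dominated /cnbhS; apply/bigcupP/hasP.
- case=> [[j y]] yD; rewrite inE => /orP [/eqP [-> ->]| /andP [Hj Hy]].
  + exists (nat_of_ord y); first exact: ord5_mem.
    by rewrite nth_bsD // inord_val5 yD /N5 eqxx.
  + move: Hj Hy => /eqP /= <- Hy.
    exists (nat_of_ord y); first exact: ord5_mem.
    by rewrite nth_bsD // inord_val5 yD /N5 Hy orbT.
- case=> y; rewrite mem_iota add0n => /andP [_ Hy] /andP [].
  rewrite nth_bsD // => HD HN; exists (i, inord y) => //.
  rewrite inE /= xpair_eqE eqxx /= eq_inord //.
  move: HN; rewrite /N5 /eG /= eqxx inordK //.
Qed.

Lemma bsD_add k (D : {set TT k}) (i : 'I_k) (b : nat) : b < 5 ->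
  bsD ((i, inord b) |: D) i = addS (bsD D i) b.
Proof.
move=> Hb; rewrite /addS /bsD; apply/eq_in_map => j.
rewrite mem_iota add0n => /andP [_ Hj].
rewrite in_setU1 xpair_eqE eqxx /= -(inj_eq val_inj) /= !inordK //.
by rewrite nth_bsD.
Qed.

Lemma bsD_other k (D : {set TT k}) (i j : 'I_k) (c : 'I_5) : j != i ->
  bsD ((i, c) |: D) j = bsD D j.
Proof.
move=> Hji; rewrite /bsD; apply: eq_map => y.
by rewrite in_setU1 xpair_eqE (negbTE Hji).
Qed.

Lemma fD_le k (D : {set TT k}) : fD D <= k * 3.
Proof.
rewrite /fD -[k in k * 3]card_ord -sum_nat_const.
by apply: leq_sum => i _; apply: g_le3.
Qed.

Lemma fD_step k (D : {set TT k}) (i : 'I_k) (b : nat) : b < 5 ->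
  g (bsD D i) <= (g (addS (bsD D i) b)).+1 ->
  fD D <= (fD ((i, inord b) |: D)).+1.
Proof.
move=> Hb Hg; rewrite /fD (bigD1 i) //= [X in _ <= X.+1](bigD1 i) //=.
rewrite bsD_add //.
have -> : \sum_(j < k | j != i) g (bsD ((i, inord b) |: D) j) =
          \sum_(j < k | j != i) g (bsD D j).
  by apply: eq_bigr => j Hj; rewrite bsD_other.
by rewrite -addSn leq_add2r.
Qed.

Lemma game_lb k n (D : {set TT k}) : minn n (fD D) <= igame (@eG k) n D.
Proof.
elim: n D => [|n IH] D /=.
  by rewrite min0n.
case: ifP => Hdom.
  have -> : fD D = 0.
    rewrite /fD big1 // => i _; rewrite /g.
    have -> // : alldom (bsD D i).
    apply/allP => a; rewrite mem_iota add0n => /andP [_ Ha].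
    by have := forallP Hdom (i, inord a); rewrite domE inordK.
  by rewrite minn0.
apply: (big_ind (fun x => minn n.+1 (fD D) <= x)).
- apply: leq_trans (geq_minr _ _) _; apply: leq_trans (fD_le D) _.
  by rewrite card_prod !card_ord leq_mul2l orbT.
- by move=> x y Hx Hy; rewrite leq_min Hx Hy.
case=> i a Hv; rewrite domE in Hv.
have := allP (@LG_all _ (size_bsD D i)) a (ord5_mem a).
rewrite Hv implyTb => /hasP [b Hb /andP [HN Hg]].
move: Hb; rewrite mem_iota add0n => /andP [_ Hb].
have Hu : (i, inord b) \in cnbh (@eG k) (i, a).
  rewrite inE xpair_eqE eqxx /=. rewrite eq_sym eq_inord // /eG /= eqxx inordK //.
  by move: HN; rewrite /N5 eq_sym.
apply: leq_trans (leq_bigmax_cond _ Hu).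
have := IH ((i, inord b) |: D).
have := fD_step Hb Hg.
lia.
Qed.

Lemma bsD_del k (S : {set TT k}) (i : 'I_k) (a y : nat) : a < 5 -> y < 5 ->
  nb (bsD (S :\ (i, inord a)) i) y = (y != a) && nb (bsD S i) y.
Proof.
move=> Ha Hy; rewrite !nth_bsD // !inE xpair_eqE eqxx /=.
by rewrite -(inj_eq val_inj) /= !inordK.
Qed.

Lemma irr_local k (S : {set TT k}) (i : 'I_k) :
  irredundant (@eG k) S -> cnt (bsD S i) <= 2.
Proof.
move=> Hirr; have := @LI_all _ (size_bsD S i); rewrite /LI => /implyP; apply.
apply/allP => a; rewrite mem_iota add0n => /andP [_ Ha]; apply/implyP.
rewrite nth_bsD // => Hx.
have := forall_inP Hirr _ Hx => /set0Pn [[j c]].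
rewrite /priv inE => /andP [Hw1 Hw2].
move: Hw1 Hw2; rewrite -!/(dominated _ _ _) !domE.
move=> Hw1 /hasP [y Hy /andP [Hy1 Hy2]].
move: Hy; rewrite mem_iota add0n => /andP [_ Hy5].
have Hji : (j == i) && (y == a).
  apply/negPn/negP => Hne; move/hasP: Hw1; apply; exists y.
    by rewrite mem_iota add0n Hy5.
  rewrite Hy2 andbT nth_bsD // !inE -nth_bsD // Hy1 andbT.
  move: Hne; apply: contra; rewrite xpair_eqE => /andP [-> /eqP H].
  by move/(congr1 val): H; rewrite /= !inordK // => ->; rewrite eqxx.
case/andP: Hji => /eqP Ej /eqP Ey; subst j y.
apply/hasP; exists (nat_of_ord c); first exact: ord5_mem.
rewrite Hy2 andTb; apply/allP => y; rewrite mem_iota add0n => /andP [_ Hy].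
apply/negP => /and3P [Hya Hny Hyc]; move/hasP: Hw1; apply; exists y.
  by rewrite mem_iota add0n Hy.
by rewrite bsD_del // Hya Hny Hyc.
Qed.

Lemma cnt_sum k (S : {set TT k}) (i : 'I_k) :
  cnt (bsD S i) = \sum_(a < 5) (if (i, a) \in S then 1 else 0).
Proof.
rewrite (eq_bigr (fun a : 'I_5 => if (i, inord (nat_of_ord a)) \in S then 1 else 0)); last first.
  by move=> a _; rewrite inord_val5.
rewrite -(big_mkord xpredT (fun j => if (i, inord j) \in S then 1 else 0)).
rewrite /cnt -sum1_count big_mkcond /index_iota subn0.
apply: eq_big_seq => j; rewrite mem_iota add0n => /andP [_ Hj].
by rewrite nth_bsD.
Qed.

Lemma card_le k (S : {set TT k}) : irredundant (@eG k) S -> #|S| <= k * 2.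
Proof.
move=> Hirr.
have -> : #|S| = \sum_(i < k) cnt (bsD S i).
  rewrite (eq_bigr (fun i => \sum_(a < 5) (if (i, a) \in S then 1 else 0)));
    last by move=> i _; rewrite cnt_sum.
  rewrite pair_big /= -sum1_card big_mkcond /=.
  by apply: eq_bigr => [[i a]] _.
rewrite -[k in k * 2]card_ord -sum_nat_const.
by apply: leq_sum => i _; apply: irr_local.
Qed.

Lemma IR_le k : upper_irredundance (@eG k) <= k * 2.
Proof. by apply/bigmax_leqP => S /maxsetp; apply: card_le. Qed.

Lemma gamma_ge k : k * 3 <= gamma_i (@eG k).
Proof.
have H0 : forall i : 'I_k, g (bsD (set0 : {set TT k}) i) = 3.
  by move=> i; rewrite /bsD /= !in_set0.
have := game_lb #|{: TT k}| (set0 : {set TT k}).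
rewrite /fD (eq_bigr (fun _ => 3)) //.
rewrite sum_nat_const card_prod !card_ord /gamma_i card_prod !card_ord.
by apply: leq_trans; rewrite leq_min leq_mul2l orbT leqnn.
Qed.

Lemma simple_eG k : simple_graph (@eG k).
Proof.
split.
  by move=> x y; rewrite /eG eq_sym /E5 orbC.
by move=> [i [[|[|[|[|[|m]]]]] H]]; rewrite /eG /E5 /= andbC.
Qed.

Import GRing.Theory Num.Theory.
Local Open Scope ring_scope.

Theorem corollary6p3 (M : int) :
  exists (T : finType) (e : rel T),
    simple_graph e /\
    M <= (gamma_i e)%:Z - (upper_irredundance e)%:Z.
Proof.
pose k := `|M|%N.
exists (TT k : finType), (@eG k); split; first exact: simple_eG.
have Hg := gamma_ge k.
have Hi := IR_le k.
have HM : M <= (k : int) by rewrite /k abszE ler_norm.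
move: Hg Hi HM; set a := gamma_i _; set b := upper_irredundance _; clearbody k a b => Hg Hi HM. lia.
Qed.
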